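(* Let $f$ be a real (or complex) polynomial of exact degree $d\ge0$. Define functions on integers by $F_0(x)=1$ and, for $i\ge1$ and integers $x\ge i-1$, $$F_i(x)=\sum_{m=i}^{x}f(m-i+1)\,F_{i-1}(m)$$ (an empty sum being $0$). Then for each $i\ge 0$ there is a polynomial $P_i$ of exact degree $i(d+1)$ such that $F_i(x)=P_i(x)$ for all integers $x\ge i-1$. In particular, if $\lambda_p\mu_p=f(p)$ for all $p\ge1$, then the quantity $c_{k,\delta}$ equals $\big(\prod_{i=1}^{\delta}\lambda_i\big)P_j\big((k+\delta)/2\big)$ with $j=(k-\delta)/2$, where $P_j$ is a polynomial of degree $j(d+1)$ not depending on $\delta$ (so for $\delta=0$, $c_{k,0}$ is the value at $k/2$ of a polynomial of degree $\tfrac{k}{2}(d+1)$).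
   Context: $c_{k,\delta}=\big(\prod_{i=1}^{\delta}\lambda_i\big)\sum\prod_{i=1}^{j}\lambda_{m_i-i+1}\mu_{m_i-i+1}$, the sum ranging over integer tuples $(m_1,\dots,m_j)$ with $m_i\ge i$ and $m_1\le m_2\le\cdots\le m_j\le (k+\delta)/2$, where $j=(k-\delta)/2$, $0\le\delta\le k$, $k-\delta$ even, and $\lambda_i,\mu_i$ are scalars. *)

(* Defs.v *)
From HB Require Import structures.
From mathcomp Require Import all_boot all_order all_algebra.
Set Implicit Arguments. Unset Strict Implicit. Unset Printing Implicit Defensive.
Import Order.TTheory GRing.Theory Num.Theory.
Local Open Scope ring_scope.

(* Here i = i'.+1, so f(m - i + 1) = f(m - i'). Defined for all nat x;
   the paper only uses x >= i - 1. *)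
Fixpoint Fseq (R : nzRingType) (f : {poly R}) (i : nat) (x : nat) : R :=
  match i with
  | 0 => 1
  | i'.+1 => \sum_(i'.+1 <= m < x.+1) f.[(m - i')%:R] * Fseq f i' m
  end.

(* c_{k,delta} = (prod_{i=1}^{delta} lam_i) *
     sum over (m_1,...,m_j), m_i >= i, m_1 <= ... <= m_j <= (k+delta)/2,
     of prod_{i=1}^{j} lam_{m_i-i+1} mu_{m_i-i+1},  j = (k - delta)/2.
   Tuples are indexed 0-based: t : 'I_j -> 'I_(N+1), t i = m_{i+1},
   condition m_{i+1} >= i+1, term lam_{t i - i} mu_{t i - i}. *)
Definition ckd (R : nzRingType) (lam mu : nat -> R) (k delta : nat) : R :=
  let j := ((k - delta)./2)%N in
  let N := ((k + delta)./2)%N in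
  (\prod_(1 <= i < delta.+1) lam i) *
  \sum_(t : {ffun 'I_j -> 'I_N.+1} |
          [forall i : 'I_j, (i.+1 <= t i)%N] &&
          [forall i : 'I_j, forall i2 : 'I_j, (i <= i2)%N ==> (t i <= t i2)%N])
     \prod_(i < j) (lam (t i - i)%N * mu (t i - i)%N).

(* Main.v *)
Require Import Defs.
From HB Require Import structures.
From mathcomp Require Import all_boot all_order all_algebra.
From mathcomp Require Import ring zify.
From Stdlib Require Import ClassicalEpsilon.
Import Order.TTheory GRing.Theory Num.Theory.
Local Open Scope ring_scope.


Lemma expand_Xm1 (R : numFieldType) (n : nat) : exists r : {poly R}, (size r <= n)%N /\
  ('X - 1) ^+ n.+1 = 'X^(n.+1) - (n.+1)%:R%:P * 'X^n + r.
Proof.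
elim: n => [|n [r [Hr Hn]]].
  exists 0; split; first by rewrite size_poly0.
  by rewrite !expr1 expr0 mulr1 addr0.
exists ('X * r + (n.+1)%:R%:P * 'X^n - r); split.
  apply: (leq_trans (size_polyD _ _)); rewrite geq_max; apply/andP; split.
    apply: (leq_trans (size_polyD _ _)); rewrite geq_max; apply/andP; split.
      apply: (leq_trans (size_polyMleq _ _)); rewrite size_polyX /=.
      change (1 + size r <= n.+1)%N; lia.
    apply: (leq_trans (size_polyMleq _ _)); rewrite size_polyXn.
    by rewrite addnS /= -add1n leq_add2r size_polyC_leq1.
  by rewrite size_polyN (leq_trans Hr).
rewrite exprS Hn !exprS.
ring.
Qed.

Lemma antidiff_n (R : numFieldType) (n : nat) : forall q : {poly R}, (size q <= n)%N ->
  exists S : {poly R}, S - (S \Po ('X - 1)) = q /\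
    size S = (if q == 0 then 0%N else (size q).+1).
Proof.
elim: n => [|n IH] q Hq.
  have q0 : q = 0 by apply/eqP; rewrite -size_poly_eq0 -leqn0.
  by exists 0; rewrite q0 comp_poly0 subr0 eqxx size_poly0.
have [->|qn0] := eqVneq q 0.
  by exists 0; rewrite comp_poly0 subr0 ?eqxx size_poly0.
case: (ltnP (size q) n.+1) => Hqs; first by have := IH q Hqs; rewrite (negbTE qn0).
have sq : size q = n.+1 by apply/eqP; rewrite eqn_leq Hq Hqs.
set c := lead_coef q.
have c0 : c != 0 by rewrite lead_coef_eq0.
have n0 : ((n.+1)%:R : R) != 0 by rewrite pnatr_eq0.
set k := c / (n.+1)%:R.
have k0 : k != 0 by rewrite mulf_neq0 // invr_eq0.
have [r [Hr Hexp]] := expand_Xm1 R n.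
set T := k%:P * 'X^(n.+1).
set q' := q - c%:P * 'X^n + k%:P * r.
have sq' : (size q' <= n)%N.
  apply: (leq_trans (size_polyD _ _)); rewrite geq_max; apply/andP; split.
    apply/leq_sizeP => j hj; rewrite coefB coefCM coefXn.
    case: (ltngtP j n) => hjn.
    - by move: hj; rewrite leqNgt hjn.
    - have : (size q <= j)%N by rewrite sq.
      by move/leq_sizeP/(_ j (leqnn j)) => ->; rewrite mulr0 subr0.
    - by rewrite hjn mulr1 /c lead_coefE sq subrr.
  by rewrite size_Cmul.
have [S' [HS' sS']] := IH q' sq'.
exists (T + S'); split.
  have hc : c%:P = k%:P * (n.+1)%:R%:P by rewrite -polyCM divfK.
  rewrite comp_polyD /T comp_polyM comp_polyC comp_Xn_poly Hexp.
  have -> : q = q' + c%:P * 'X^n - k%:P * r by rewrite /q'; ring.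
  rewrite hc -HS'; ring.
have sT : size T = n.+2 by rewrite /T size_Cmul // size_polyXn.
rewrite sq size_polyDl // sT.
by rewrite sS'; case: (q' == 0) => //; rewrite ltnS.
Qed.

Lemma antidiff (R : numFieldType) (q : {poly R}) : exists S : {poly R}, S - (S \Po ('X - 1)) = q /\
    size S = (if q == 0 then 0%N else (size q).+1).
Proof. exact: (@antidiff_n R (size q) q (leqnn _)). Qed.

Lemma part1 (R : numFieldType) (d : nat) (f : {poly R}) (hf : size f = d.+1) (i : nat) :
  exists p : {poly R}, size p = (i * d.+1).+1 /\
    forall x : nat, (i.-1 <= x)%N -> Fseq f i x = p.[x%:R].
Proof.
elim: i => [|i [p [sp Hp]]].
  exists 1; split; first by rewrite size_poly1 mul0n.
  by move=> x _ /=; rewrite hornerC.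
set q := (f \Po ('X - (i%:R)%:P)) * p.
have p0 : p != 0 by rewrite -size_poly_gt0 sp.
have sf : size (f \Po ('X - (i%:R)%:P)) = d.+1.
  by rewrite size_comp_poly2 ?size_XsubC.
have f0 : f \Po ('X - (i%:R)%:P) != 0 by rewrite -size_poly_gt0 sf.
have sq : size q = (i.+1 * d.+1)%N by rewrite size_mul // sf sp addnS mulSn.
have q0 : q != 0 by rewrite -size_poly_gt0 sq muln_gt0.
have [S [HS sS]] := antidiff _ q.
rewrite (negbTE q0) sq in sS.
exists (S - (S.[i%:R])%:P); split.
  rewrite size_polyDl sS //.
  rewrite size_polyN; apply: leq_ltn_trans (size_polyC_leq1 _) _.
  by rewrite ltnS muln_gt0.
move=> x /= hx.
have key : forall m : nat, S.[m.+1%:R] - S.[m%:R] = q.[m.+1%:R].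
  move=> m; rewrite -HS !hornerE horner_comp !hornerE -natr1 addrK.
  done.
rewrite big_add1 /=.
rewrite (eq_big_nat _ _ (F2 := fun m => S.[m.+1%:R] - S.[m%:R])).
  by rewrite telescope_sumr // !hornerE.
move=> m /andP [hm _].
rewrite key /q hornerM horner_comp !hornerE -Hp; last by rewrite /=; apply: (leq_trans (leq_pred i)); apply: (leq_trans hm).
by rewrite natrB // (leq_trans hm).
Qed.

Definition Cond (j M N : nat) (t : {ffun 'I_j -> 'I_M}) : bool :=
  [forall i : 'I_j, (i.+1 <= t i)%N] &&
  [forall i : 'I_j, forall i2 : 'I_j, (i <= i2)%N ==> (t i <= t i2)%N] &&
  [forall i : 'I_j, (t i <= N)%N].
Arguments Cond {j M} N t.

Definition hh (j M : nat) (p : 'I_M * {ffun 'I_j -> 'I_M}) : {ffun 'I_j.+1 -> 'I_M} :=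
  [ffun i : 'I_j.+1 => if unlift ord_max i is Some i' then p.2 i' else p.1].

Definition hh' (j M : nat) (t : {ffun 'I_j.+1 -> 'I_M}) : 'I_M * {ffun 'I_j -> 'I_M} :=
  (t ord_max, [ffun i : 'I_j => t (lift ord_max i)]).

Lemma hhmax j M p : @hh j M p ord_max = p.1.
Proof. by rewrite ffunE unlift_none. Qed.

Lemma hhlift j M p (i : 'I_j) : @hh j M p (lift ord_max i) = p.2 i.
Proof. by rewrite ffunE liftK. Qed.

Lemma hh_bij j M : bijective (@hh j M).
Proof.
exists (@hh' j M).
  case=> m g; rewrite /hh' hhmax; congr pair; apply/ffunP => i.
  by rewrite ffunE hhlift.
move=> t; apply/ffunP => i; rewrite ffunE.
by case: unliftP => [i' ->|->] /=; rewrite ?ffunE.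
Qed.

Lemma condE j M N m g :
  Cond N (@hh j M (m, g)) = (j < m <= N)%N && Cond m g.
Proof.
apply/idP/idP.
  case/andP => [/andP [/forallP A1 /forallP A2] /forallP A3].
  have := A1 ord_max; rewrite hhmax /= => h1.
  have := A3 ord_max; rewrite hhmax /= => h3.
  rewrite h1 h3 /=; apply/andP; split; [apply/andP; split|].
  - apply/forallP => i; have := A1 (lift ord_max i).
    by rewrite hhlift lift_max.
  - apply/forallP => i; apply/forallP => i2; apply/implyP => le.
    have := A2 (lift ord_max i); move/forallP/(_ (lift ord_max i2)).
    by rewrite !hhlift !lift_max le.
  - apply/forallP => i; have := A2 (lift ord_max i).
    move/forallP/(_ ord_max); rewrite hhlift hhmax lift_max /=.
    by rewrite (ltnW (ltn_ord i)).
case/andP => [/andP [h1 h3]] /andP [/andP [/forallP A1 /forallP A2] /forallP A3].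
apply/andP; split; [apply/andP; split|].
- apply/forallP => i; case: (unliftP ord_max i) => [i' ->|->].
    by rewrite hhlift lift_max.
  by rewrite hhmax.
- apply/forallP => i; apply/forallP => i2; apply/implyP.
  case: (unliftP ord_max i) => [i' ->|->]; case: (unliftP ord_max i2) => [i2' ->|->].
  + rewrite !hhlift !lift_max => le; exact: (implyP (forallP (A2 i') i2') le).
  + by rewrite hhlift hhmax => _; apply: A3.
  + rewrite lift_max /= => le; exfalso; move: (ltn_ord i2').
    by rewrite ltnNge le.
  + by rewrite hhmax.
- apply/forallP => i; case: (unliftP ord_max i) => [i' ->|->].
    by rewrite hhlift (leq_trans (A3 i') h3).
  by rewrite hhmax.
Qed.

Lemma prodE (R : numFieldType) (f : {poly R}) j M m g :
  \prod_(i < j.+1) f.[((@hh j M (m, g)) i - i)%:R] =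
  (\prod_(i < j) f.[(g i - i)%:R]) * f.[(m - j)%:R].
Proof.
rewrite big_ord_recr hhmax /=; congr (_ * _); apply: eq_bigr => i _.
have -> : widen_ord (leqnSn j) i = lift ord_max i by apply: val_inj; rewrite /= /bump leqNgt ltn_ord.
by rewrite hhlift.
Qed.

Lemma comb (R : numFieldType) (f : {poly R}) (M j : nat) : forall N : nat, (N < M)%N ->
  \sum_(t : {ffun 'I_j -> 'I_M} | Cond N t) \prod_(i < j) f.[(t i - i)%:R] = Fseq f j N.
Proof.
elim: j => [|j IH] N hN.
  rewrite (eq_bigl xpredT); last first.
    by move=> t; rewrite /Cond; apply/andP; split; [apply/andP; split|]; apply/forallP; case.
  under eq_bigr do rewrite big_ord0.
  by rewrite sumr_const card_ffun !card_ord expn0.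
rewrite (reindex (@hh j M)) /=; last exact/onW_bij/hh_bij.
rewrite (eq_bigl (fun p : 'I_M * {ffun 'I_j -> 'I_M} => (j < p.1 <= N)%N && Cond p.1 p.2)); last first.
  by case=> m g; rewrite condE.
rewrite (eq_bigr (fun p : 'I_M * {ffun 'I_j -> 'I_M} => (\prod_(i < j) f.[(p.2 i - i)%:R]) * f.[(p.1 - j)%:R])); last first.
  by case=> m g _; rewrite prodE.
rewrite -(pair_big_dep (fun m : 'I_M => (j < m <= N)%N) (fun (m : 'I_M) g => Cond m g)
  (fun (m : 'I_M) g => (\prod_(i < j) f.[(g i - i)%:R]) * f.[(m - j)%:R])) /=.
rewrite (eq_bigr (fun m : 'I_M => Fseq f j m * f.[(m - j)%:R])); last first.
  by move=> m _; rewrite -big_distrl /= IH.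
rewrite [RHS](@big_nat_widenl _ _ _ _ 0); last by []. rewrite [RHS](@big_nat_widen _ _ _ _ _ M); last exact: hN.
rewrite big_mkord; apply: eq_big => [m|m _]; last exact: mulrC.
by rewrite /= ltnS.

Qed.

Theorem mainTheorem7 (R : numFieldType) (d : nat) (f : {poly R})
    (hf : size f = d.+1) :
  exists P : nat -> {poly R},
    (forall i : nat,
        size (P i) = (i * d.+1).+1 /\
        (forall x : nat, (i.-1 <= x)%N -> Fseq f i x = (P i).[x%:R])) /\
    (forall lam mu : nat -> R,
        (forall p : nat, (0 < p)%N -> lam p * mu p = f.[p%:R]) ->
        forall k delta : nat, (delta <= k)%N -> ~~ odd (k - delta) ->
          ckd lam mu k delta =
          (\prod_(1 <= i < delta.+1) lam i) *
          (P ((k - delta)./2)%N).[((k + delta)./2)%:R]).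
Proof.
pose P i := proj1_sig (constructive_indefinite_description _ (part1 R d f hf i)).
have HP : forall i, size (P i) = (i * d.+1).+1 /\
    (forall x : nat, (i.-1 <= x)%N -> Fseq f i x = (P i).[x%:R]).
  move=> i; exact: (proj2_sig (constructive_indefinite_description _ (part1 R d f hf i))).
exists P; split; first exact: HP.
move=> lam mu hlm k delta hdk _.
rewrite /ckd; congr (_ * _).
have hjN : (((k - delta)./2).-1 <= (k + delta)./2)%N.
  apply: leq_trans (leq_pred _) _; apply: half_leq.
  by apply: leq_trans (leq_subr _ _) (leq_addr _ _).
rewrite -(proj2 (HP _) _ hjN) -(comb _ f ((k + delta)./2).+1 _ _ (ltnSn _)).
apply: eq_big => t.
  rewrite /Cond (_ : [forall i, (t i <= (k + delta)./2)%N] = true) ?andbT //.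
  by apply/forallP => i; rewrite -ltnS ltn_ord.
case/andP => /forallP A1 _; apply: eq_bigr => i _; rewrite hlm //.
by rewrite subn_gt0.
Qed.
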